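(* Let $x_1,\dots,x_n$ be independent Bernoulli random variables, $p_i=\mathbb{E}x_i$ and $\bar p=\frac1n\sum_{i=1}^np_i$. For any $r>0$, $\varepsilon>0$, $\delta\in(0,1)$ and $q\in[0,1]$ with $|q-\bar p|\le r$, with probability at least $1-\delta$, $$\frac1n\sum_{i=1}^nx_i-\bar p<\varepsilon r+\sqrt{\frac{2q(1-q)\log(1/\delta)}{n}}+\Big(\frac23+\frac1{2\varepsilon}\Big)\frac{\log(1/\delta)}{n}.$$ The same upper bound also holds for $\bar p-\frac1n\sum_{i=1}^nx_i$ with probability at least $1-\delta$. *)

(* Defs.v *)
From HB Require Import structures.
From mathcomp Require Import all_boot all_order all_algebra.
From mathcomp Require Import all_classical all_reals all_analysis.
Set Implicit Arguments. Unset Strict Implicit. Unset Printing Implicit Defensive.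
Import Order.TTheory GRing.Theory Num.Theory.
Local Open Scope classical_set_scope.
Local Open Scope ring_scope.

(* Mutual independence of the finite family X_0, ..., X_{n-1} of real random
   variables: for all Borel sets B_0, ..., B_{n-1},
   P(X_0 \in B_0, ..., X_{n-1} \in B_{n-1}) = prod_i P(X_i \in B_i).
   (Taking B_i = setT recovers the product rule for every subfamily.) *)
Definition mutually_independent d (T : measurableType d) (R : realType)
  (P : probability T R) (n : nat) (X : 'I_n -> {RV P >-> R}) : Prop :=
  forall B : 'I_n -> set R, (forall i, measurable (B i)) ->
    P (\big[setI/setT]_(i < n) (X i @^-1` B i)) =
    (\prod_(i < n) P (X i @^-1` B i))%E.

Definition bernoulli_rv d (T : measurableType d) (R : realType)
  (P : probability T R) (X : {RV P >-> R}) : Prop :=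
  P [set w | X w = 0 \/ X w = 1] = 1%E.

(* Main.v *)
Require Import Defs.
From HB Require Import structures.
From mathcomp Require Import all_boot all_order all_algebra.
From mathcomp Require Import all_classical all_reals all_analysis.
From mathcomp Require Import ring lra measurable_realfun.
Import Order.TTheory GRing.Theory Num.Theory.
Local Open Scope classical_set_scope.
Local Open Scope ring_scope.

Definition wB {R : realType} (p : R) (b : bool) := if b then p else 1 - p.

Section RealFacts.
Variable R : realType.

Lemma series_exp4 (x : R) : series (exp_coeff x) 4 = 1 + x + x^+2/2 + x^+3/6.
Proof.
rewrite /series /= !big_nat_recr //= big_nil /exp_coeff /=.
rewrite !factS /= fact0 expr0 expr1 !divr1.
by rewrite add0r.
Qed.

Lemma series_exp_nd (x : R) : 0 <= x -> nondecreasing_seq (series (exp_coeff x)).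
Proof.
move=> x0; rewrite /series /=.
apply: (@nondecreasing_series _ _ xpredT) => k _ _.
exact: exp_coeff_ge0.
Qed.

Lemma expR_lb3 (x : R) : 0 <= x -> 1 + x + x^+2/2 + x^+3/6 <= expR x.
Proof.
move=> x0; rewrite -series_exp4 /expR.
apply: nondecreasing_cvgn_le; first exact: series_exp_nd.
exact: is_cvg_series_exp_coeff.
Qed.

Lemma expRN_ub (y : R) : 0 <= y -> expR (- y) <= 1 - y + y^+2/2.
Proof.
move=> y0; rewrite expRN.
have Q0 : 0 < 1 - y + y^+2/2 by nra.
rewrite -[_^-1]mulr1 ler_pdivrMl ?expR_gt0//.
have h := expR_lb3 y y0.
have h2 : (1 + y + y^+2/2 + y^+3/6) * (1 - y + y ^+ 2 / 2) <= expR y * (1 - y + y ^+ 2 / 2) by rewrite ler_wpM2r // ltW.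
apply: le_trans h2.
nra.
Qed.

Lemma fact_ge (k : nat) : (2 * 3 ^ k <= (k.+2)`!)%N.
Proof.
elim: k => [|k IH]; first by [].
rewrite factS expnS mulnCA.
apply: leq_mul => //.
Qed.

Lemma expR_ub (a lam : R) : 0 <= a -> a <= lam -> lam < 3 ->
  expR a <= 1 + a + a^+2 * (2 * (1 - lam/3))^-1.
Proof.
move=> a0 alam lam3.
set t := lam / 3.
have t0 : 0 <= t by rewrite /t; lra.
have t1 : t < 1 by rewrite /t; lra.
have key k : series (exp_coeff a) k.+2 <= 1 + a + a^+2/2 * \sum_(j < k) t ^+ j.
  elim: k => [|k IH].
    rewrite big_ord0 mulr0 addr0 /series /= !big_nat_recr //= big_nil /exp_coeff /=.
    by rewrite /= add0r expr0 expr1 !divr1.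
  rewrite /series /= big_nat_recr //= big_ord_recr /= mulrDr addrA.
  rewrite /series /= in IH.
  apply: lerD; first exact: IH.
  rewrite /exp_coeff /=.
  have h1 : 0 < (2 * 3 ^+ k) :> R by rewrite mulr_gt0 // exprn_gt0.
  apply: (@le_trans _ _ (a ^+ k.+2 / (2 * 3 ^+ k))).
    apply: ler_wpM2l; first exact: exprn_ge0.
    rewrite lef_pV2 ?posrE ?ltr0n ?fact_gt0 //.
    by rewrite -(natrX R 3 k) -natrM ler_nat fact_ge.
  have -> : a ^+ k.+2 / (2 * 3 ^+ k) = a^+2/2 * (a/3)^+k.
    rewrite expr_div_n -addn2 exprD; field.
    by rewrite expf_neq0.
  apply: ler_wpM2l; first by apply: divr_ge0 => //; exact: sqr_ge0.
  apply: lerXn2r; rewrite ?nnegrE /t; lra.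
have geo k : \sum_(j < k) t ^+ j <= (1 - t)^-1.
  have -> : \sum_(j < k) t ^+ j = (1 - t ^+ k) / (1 - t).
    apply: (@mulIf _ (1 - t)); first lra.
    rewrite mulfVK; last lra.
    have h := subrX1 t k.
    transitivity (-((t - 1) * \sum_(i < k) t ^+ i)); first by ring.
    by rewrite -h; ring.
  rewrite ler_pdivrMr; last lra.
  rewrite mulVf; last lra.
  have : 0 <= t ^+ k by exact: exprn_ge0.
  lra.
have B k : series (exp_coeff a) k <= 1 + a + a^+2 * (2 * (1 - lam/3))^-1.
  apply: (@le_trans _ _ (series (exp_coeff a) k.+2)).
    by apply: (series_exp_nd a a0); rewrite leqW.
  apply: (le_trans (key k)).
  rewrite lerD2l.
  have -> : a ^+ 2 * (2 * (1 - lam / 3))^-1 = a^+2/2 * (1 - t)^-1.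
    rewrite /t; field; lra.
  apply: ler_wpM2l; last exact: geo.
  by apply: divr_ge0 => //; exact: sqr_ge0.
rewrite /expR; apply: limr_le; first exact: is_cvg_series_exp_coeff.
by near=> k; apply: B.
Unshelve. all: by end_near.
Qed.



Lemma mgf_bern (p lam : R) : 0 <= p -> p <= 1 -> 0 <= lam -> lam < 3 ->
  \sum_(bb : bool) wB p bb * expR (lam * ((bb : nat)%:R - p))
  <= expR (lam ^+ 2 * (2 * (1 - lam / 3))^-1 * (p * (1 - p))).
Proof.
move=> p0 p1 l0 l3.
rewrite big_bool /wB /=.
set c := (2 * (1 - lam / 3))^-1.
have c12 : 1/2 <= c.
  rewrite /c div1r lef_pV2 ?posrE; lra.
have e1 : expR (lam * (1 - p)) <= 1 + lam * (1 - p) + (lam * (1 - p))^+2 * c.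
  apply: expR_ub => //; first by apply: mulr_ge0 => //; lra.
  by rewrite -{2}[lam]mulr1 ler_wpM2l //; lra.
have e0 : expR (lam * (0 - p)) <= 1 - lam * p + (lam * p)^+2 / 2.
  rewrite sub0r mulrN; apply: expRN_ub; exact: mulr_ge0.
have h1 : p * expR (lam * (1 - p)) <= p * (1 + lam * (1 - p) + (lam * (1 - p))^+2 * c).
  by rewrite ler_wpM2l.
have h0 : (1 - p) * expR (lam * (0 - p)) <= (1 - p) * (1 - lam * p + (lam * p)^+2 / 2).
  by rewrite ler_wpM2l //; lra.
have pos : 0 <= lam^+2 * p^+2 * (1 - p) * (c - 1/2).
  apply: mulr_ge0; last lra.
  apply: mulr_ge0; last lra.
  by apply: mulr_ge0; apply: sqr_ge0.
apply: (le_trans _ (expR_ge1Dx _)).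
idtac.
have E : p * (1 + lam * (1 - p) + (lam * (1 - p))^+2 * c) + (1 - p) * (1 - lam * p + (lam * p)^+2 / 2)
   = 1 + lam ^+ 2 * c * (p * (1 - p)) - lam^+2 * p^+2 * (1 - p) * (c - 1/2) by ring.
lra.
Qed.


Lemma fin_chernoff (n : nat) (p : 'I_n -> R) (lam T : R) :
  (forall i, 0 <= p i <= 1) -> 0 <= lam -> lam < 3 ->
  \sum_(b : {ffun 'I_n -> bool} | T <= \sum_i ((b i : nat)%:R - p i))
     \prod_i wB (p i) (b i)
  <= expR (- (lam * T) + lam ^+ 2 * (2 * (1 - lam / 3))^-1 * \sum_i p i * (1 - p i)).
Proof.
move=> hp l0 l3.
set c := (2 * (1 - lam / 3))^-1.
have w0 i bb : 0 <= wB (p i) bb.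
  by rewrite /wB; case: bb; have := hp i; lra.
pose G i (bb : bool) := wB (p i) bb * expR (lam * ((bb : nat)%:R - p i)).
apply: (@le_trans _ _ (\sum_(b : {ffun 'I_n -> bool})
    expR (- (lam * T)) * \prod_i G i (b i))).
  rewrite [X in X <= _]big_mkcond /=; apply: ler_sum => b _.
  have -> : expR (- (lam * T)) * \prod_i G i (b i)
      = (\prod_i wB (p i) (b i)) * expR (lam * (\sum_i ((b i : nat)%:R - p i) - T)).
    rewrite mulrBr addrC expRD mulr_sumr expR_sum /G big_split /=.
    ring.
  have P0 : 0 <= \prod_i wB (p i) (b i) by apply: prodr_ge0 => i _.
  case: ifP => H.
    apply: ler_peMr => //.
    apply: (le_trans _ (expR_ge1Dx _)).
    rewrite lerDl; apply: mulr_ge0 => //; lra.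
  by apply: mulr_ge0 => //; exact: expR_ge0.
rewrite -big_distrr /= -bigA_distr_bigA /=.
rewrite expRD; apply: ler_wpM2l; first exact: expR_ge0.
rewrite big_distrr /= expR_sum.
apply: ler_prod => i _; apply/andP; split.
  by apply: sumr_ge0 => bb _; apply: mulr_ge0 => //; exact: expR_ge0.
have := hp i => /andP[? ?].
exact: mgf_bern.
Qed.

End RealFacts.

Lemma bern_prob d (T : measurableType d) (R : realType) (P : probability T R)
  (Y : {RV P >-> R}) : bernoulli_rv Y ->
  P (Y @^-1` [set 1]) = (fine 'E_P[Y])%:E /\
  P (Y @^-1` [set 0]) = (1 - fine 'E_P[Y])%:E.
Proof.
move=> hb.
set A1 := Y @^-1` [set 1]; set A0 := Y @^-1` [set 0].
have mA1 : measurable A1 by apply: measurable_funPTI; exact: measurable_set1.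
have mA0 : measurable A0 by apply: measurable_funPTI; exact: measurable_set1.
have GE : [set w | Y w = 0 \/ Y w = 1] = A0 `|` A1 by [].
have mG : measurable [set w | Y w = 0 \/ Y w = 1] by rewrite GE; exact: measurableU.
have E : ('E_P[Y] = P A1)%E.
  rewrite unlock.
  transitivity (\int[P]_w (\1_A1 w)%:E)%E; last by rewrite integral_indic // setIT.
  apply: ae_eq_integral => //.
  - by apply/measurable_EFinP; exact: measurable_funPT.
  - by apply/measurable_EFinP; exact: measurable_indic.
  exists (~` [set w | Y w = 0 \/ Y w = 1]); split.
  - exact: measurableC.
  - have := probability_setC P mG. rewrite hb subee // => ->.
  move=> w /= H HG; apply: H => _.
  rewrite indicE; case: HG => hw.
    rewrite memNset ?hw //= /A1 /=; lra.
  by rewrite mem_set ?hw.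
have fin1 : P A1 \is a fin_num by exact: fin_num_measure.
have E1 : P A1 = (fine 'E_P[Y])%:E by rewrite E fineK.
split => //.
have : P (A0 `|` A1) = (P A0 + P A1)%E.
  apply: measureU => //.
  apply/seteqP; split => w //= [h0 h1]; move: h0 h1; rewrite /A0 /A1 /= => ->; lra.
have hb' : P (A0 `|` A1) = 1%E by rewrite -hb GE.
rewrite hb' E1 => /esym h.
have fin0 : P A0 \is a fin_num by exact: fin_num_measure.
rewrite -(fineK fin0) in h *.
have h2 : fine (P A0) + fine 'E_P[Y] = 1 by apply: EFin_inj; rewrite EFinD.
by congr (_%:E); lra.
Qed.

Lemma bigsetI_in (T : Type) (n : nat) (F : 'I_n -> set T) x :
  (forall i, F i x) -> (\big[setI/setT]_(i < n) F i) x.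
Proof. by move=> H; elim/big_ind: _ => // A B hA hB; split. Qed.

Lemma bigsetI_meas d (T : measurableType d) (n : nat) (F : 'I_n -> set T) :
  (forall i, measurable (F i)) -> measurable (\big[setI/setT]_(i < n) F i).
Proof. by move=> H; elim/big_ind: _ => //; exact: measurableI. Qed.

Lemma bigsetU_sub (T : Type) (I : finType) (Q : pred I) (F : I -> set T) i :
  Q i -> F i `<=` \big[setU/set0]_(j | Q j) F j.
Proof. by move=> Qi; rewrite (bigD1 i) //= => x Fx; left. Qed.

Lemma meas_bigsetU_le d (T : measurableType d) (R : realType)
  (mu : {measure set T -> \bar R}) (I : finType) (Q : pred I) (F : I -> set T) :
  (forall i, measurable (F i)) ->
  measurable (\big[setU/set0]_(j | Q j) F j) /\
  (mu (\big[setU/set0]_(j | Q j) F j) <= \sum_(j | Q j) mu (F j))%E.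
Proof.
move=> mF.
elim/big_ind2: _ => //.
- by split; rewrite ?measure0.
- move=> A a B b [mA hA] [mB hB]; split; first exact: measurableU.
  apply: (le_trans (measureU2 _ mA mB)).
  exact: leeD.
Qed.

Lemma core d (T : measurableType d) (R : realType) (P : probability T R) (n : nat)
  (X : 'I_n -> {RV P >-> R}) (hbern : forall i, bernoulli_rv (X i))
  (hindep : mutually_independent X)
  (c : bool) (pc : 'I_n -> R)
  (hpc : forall i (bb : bool), P (X i @^-1` [set ((bb (+) c : bool) : nat)%:R]) = (wB (pc i) bb)%:E)
  (Tt : R) :
  let S := [set w | Tt <= \sum_(i < n) ((if c then 1 - X i w else X i w) - pc i)] in
  measurable S /\
  (P S <= (\sum_(b : {ffun 'I_n -> bool} | Tt <= \sum_i ((b i : nat)%:R - pc i))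
              \prod_i wB (pc i) (b i))%:E)%E.
Proof.
move=> S.
pose f w := \sum_(i < n) ((if c then 1 - X i w else X i w) - pc i).
have mf : measurable_fun setT f.
  apply: measurable_sum => i.
  apply: measurable_funB; last exact: measurable_cst.
  case: c {hpc S f}; last exact: measurable_funPT.
  by apply: measurable_funB; [exact: measurable_cst | exact: measurable_funPT].
have mS : measurable S.
  have -> : S = f @^-1` `[Tt, +oo[.
    by apply/seteqP; split => w /=; rewrite in_itv /= andbT.
  by rewrite -[_ @^-1` _]setTI; apply: mf => //; exact: measurable_itv.
split => //.
pose G i := [set w | X i w = 0 \/ X i w = 1].
have mG i : measurable (G i).
  have -> : G i = X i @^-1` [set 0] `|` X i @^-1` [set 1] by [].
  by apply: measurableU; apply: measurable_funPTI; exact: measurable_set1.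
have PG0 i : P (~` G i) = 0%E.
  by rewrite (probability_setC P (mG i)) hbern subee.
pose E (b : {ffun 'I_n -> bool}) :=
  \big[setI/setT]_(i < n) (X i @^-1` [set ((b i (+) c : bool) : nat)%:R]).
have mE b : measurable (E b).
  by apply: bigsetI_meas => i; apply: measurable_funPTI; exact: measurable_set1.
pose bad (b : {ffun 'I_n -> bool}) := Tt <= \sum_i ((b i : nat)%:R - pc i).
pose U1 := \big[setU/set0]_(i < n) ~` G i.
pose U2 := \big[setU/set0]_(b | bad b) E b.
have [mU1 hU1] := @meas_bigsetU_le _ _ _ P _ xpredT (fun i => ~` G i) (fun i => measurableC (mG i)).
have [mU2 hU2] := @meas_bigsetU_le _ _ _ P _ bad E mE.
have cover : S `<=` U1 `|` U2.
  move=> w Sw.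
  have [allG|] := pselect (forall i, G i w); last first.
    move=> /existsNP [i nG]; left.
    by apply: (@bigsetU_sub _ _ xpredT (fun i => ~` G i) i).
  right.
  pose b := [ffun i => (X i w == 1) (+) c].
  have val i : ((b i (+) c : bool) : nat)%:R = X i w.
    rewrite ffunE addbK; case: (allG i) => ->; last by rewrite eqxx.
    by rewrite eq_sym oner_eq0.
  have val2 i : ((b i : bool) : nat)%:R = (if c then 1 - X i w else X i w) :> R.
    rewrite ffunE; case: (allG i) => ->; destruct c;
      rewrite ?eqxx ?(eq_sym 0) ?oner_eq0 /=; lra.
  apply: (@bigsetU_sub _ _ bad E b).
    rewrite /bad; under eq_bigr do rewrite val2; exact: Sw.
  by apply: bigsetI_in => i /=; rewrite val.
have hle : (P S <= P (U1 `|` U2))%E.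
  by apply: le_measure => //; rewrite inE //; exact: measurableU.
apply: (le_trans hle).
have PU1 : P U1 = 0%E.
  apply/eqP; rewrite eq_le measure_ge0 andbT.
  apply: (le_trans hU1); rewrite big1 // => i _.
  exact: PG0.
have hU : (P (U1 `|` U2) <= P U1 + P U2)%E by exact: measureU2.
rewrite PU1 add0e in hU.
apply: (le_trans hU); apply: (le_trans hU2).
rewrite -sumEFin; apply: lee_sum => b _.
apply: (@le_trans _ _ (P (E b))); first exact: lexx.
have h : P (E b) = (\prod_i wB (pc i) (b i))%:E; last by rewrite h.
rewrite /E hindep; last by move=> i; exact: measurable_set1.
by rewrite -prodEFin; under eq_bigr do rewrite hpc.
Qed.

Lemma expo_bound (R : realType) (V L s : R) : 0 < V -> 0 < L -> 0 <= s -> 2 * V * L <= s ^+ 2 ->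
  let Tm := s + 2 * L / 3 in let lam := Tm / (V + Tm / 3) in
  [/\ 0 <= lam, lam < 3 &
      - (lam * Tm) + lam ^+ 2 * (2 * (1 - lam / 3))^-1 * V <= - L].
Proof.
move=> V0 L0 s0 hs Tm lam.
have Tm0 : 0 < Tm by rewrite /Tm; lra.
have D0 : 0 < V + Tm / 3 by lra.
have lam0 : 0 <= lam by rewrite /lam divr_ge0 // ltW.
have lam3 : lam < 3.
  by rewrite /lam ltr_pdivrMr //; lra.
split => //.
have E : - (lam * Tm) + lam ^+ 2 * (2 * (1 - lam / 3))^-1 * V = - (Tm ^+ 2 / (2 * (V + Tm / 3))).
  rewrite /lam; field.
  by apply/andP; split; apply/eqP; lra.
rewrite E lerN2 ler_pdivlMr; last lra.
have Ls : 0 <= L * s by apply: mulr_ge0 => //; exact: ltW.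
rewrite /Tm; nra.
Qed.

Arguments bern_prob {d T R P Y}.
Arguments core {d T R P n X} hbern hindep {c pc} hpc Tt.
Arguments expo_bound {R V L s}.
Arguments fin_chernoff {R n p lam} T _ _ _.

Theorem lemma2 (d : measure_display) (T : measurableType d) (R : realType)
  (P : probability T R) (n : nat) (hn : (0 < n)%N)
  (X : 'I_n -> {RV P >-> R})
  (hbern : forall i, bernoulli_rv (X i))
  (hindep : mutually_independent X)
  (r eps delta q : R) (hr : 0 < r) (heps : 0 < eps)
  (hdelta0 : 0 < delta) (hdelta1 : delta < 1)
  (hq0 : 0 <= q) (hq1 : q <= 1) :
  let p := fun i => fine ('E_P[X i]) in
  let pbar := n%:R^-1 * \sum_(i < n) p i in
  let xbar := fun w => n%:R^-1 * \sum_(i < n) X i w in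
  let bound := eps * r
      + Num.sqrt (2 * q * (1 - q) * ln delta^-1 / n%:R)
      + (2 / 3 + 1 / (2 * eps)) * (ln delta^-1 / n%:R) in
  `|q - pbar| <= r ->
  ((1 - delta)%:E <= P [set w | (xbar w - pbar < bound)%R])%E /\
  ((1 - delta)%:E <= P [set w | (pbar - xbar w < bound)%R])%E.
Proof.
move=> p pbar xbar bound hqp.
have n0 : 0 < n%:R :> R by rewrite ltr0n.
have hp1 i : P (X i @^-1` [set 1]) = (p i)%:E by have [] := bern_prob (hbern i).
have hp0 i : P (X i @^-1` [set 0]) = (1 - p i)%:E by have [] := bern_prob (hbern i).
have hp i : 0 <= p i <= 1.
  have h1 : (0 <= P (X i @^-1` [set 1%R]))%E by exact: measure_ge0.
  have h0 : (0 <= P (X i @^-1` [set 0%R]))%E by exact: measure_ge0.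
  rewrite hp1 lee_fin in h1; rewrite hp0 lee_fin in h0.
  apply/andP; split => //; lra.
set L := ln delta^-1.
have L0 : 0 < L by rewrite /L ln_gt0 // invf_gt1.
have eL : expR (- L) = delta.
  by rewrite /L lnV ?posrE // opprK lnK // posrE.
have sp : \sum_i p i = n%:R * pbar by rewrite /pbar mulrA mulfV ?mul1r // gt_eqF.
have pb0 : 0 <= pbar by rewrite /pbar mulr_ge0 // ?invr_ge0 ?ler0n // sumr_ge0 // => i _; case/andP: (hp i).
have pb1 : pbar <= 1.
  have : \sum_i p i <= \sum_(i < n) 1 by apply: ler_sum => i _; case/andP: (hp i).
  rewrite sumr_const card_ord sp -[X in _ <= X]mulr1 => h.
  by rewrite -(ler_pM2l n0).
set V := \sum_i p i * (1 - p i).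
set V' := n%:R * (q * (1 - q) + r).
have V'0 : 0 < V' by rewrite /V' mulr_gt0 //; nra.
have VV' : V <= V'.
  have E1 : \sum_i (p i - pbar) ^+ 2 = \sum_i p i ^+ 2 - 2 * pbar * \sum_i p i + n%:R * pbar ^+ 2.
    rewrite (eq_bigr (fun i => p i ^+ 2 - 2 * pbar * p i + pbar ^+ 2)); last by move=> i _; ring.
    rewrite !big_split /= sumrN -mulr_sumr sumr_const card_ord -(mulr_natl (pbar ^+ 2) n); ring.
  have E2 : V = \sum_i p i - \sum_i p i ^+ 2.
    rewrite /V -sumrB; apply: eq_bigr => i _; ring.
  have h0 : 0 <= \sum_i (p i - pbar) ^+ 2 by apply: sumr_ge0 => i _; exact: sqr_ge0.
  rewrite E1 sp in h0; rewrite E2 sp /V'.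
  have := hqp; rewrite ler_norml => /andP[h1 h2].
  have h3 : pbar * (1 - pbar) <= q * (1 - q) + r by nra.
  nra.
set u := n%:R * Num.sqrt (2 * q * (1 - q) * L / n%:R).
set ww := n%:R * eps * r + L / (2 * eps).
have u0 : 0 <= u by rewrite /u; apply: mulr_ge0; [exact: ltW | exact: sqrtr_ge0].
have w0 : 0 <= ww by rewrite /ww addr_ge0 ?divr_ge0 ?mulr_ge0 ?ltW //; lra.
have u2 : u ^+ 2 = 2 * n%:R * (q * (1 - q)) * L.
  rewrite /u exprMn sqr_sqrtr; first by field; rewrite gt_eqF.
  apply: divr_ge0; last exact: ltW.
  apply: mulr_ge0; last exact: ltW.
  by apply: mulr_ge0; lra.
have w2 : 2 * n%:R * r * L <= ww ^+ 2.
  have : 0 <= (n%:R * eps * r - L / (2 * eps)) ^+ 2 by exact: sqr_ge0.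
  have -> : (n%:R * eps * r - L / (2 * eps)) ^+ 2 = ww ^+ 2 - 2 * n%:R * r * L.
    by rewrite /ww; field; rewrite gt_eqF.
  lra.
set s := u + ww.
have s0 : 0 <= s by rewrite /s addr_ge0.
have hs : 2 * V' * L <= s ^+ 2.
  rewrite /s /V'.
  have : 0 <= u * ww by exact: mulr_ge0.
  nra.
have [lam0 lam3 hexp] := expo_bound V'0 L0 s0 hs.
set Tm := s + 2 * L / 3 in lam0 lam3 hexp.
set lam := Tm / (V' + Tm / 3) in lam0 lam3 hexp.
have TmE : Tm = n%:R * bound.
  rewrite /Tm /s /u /ww /bound -/L; set SQ := Num.sqrt _; field.
  by apply/andP; split; apply/eqP; lra.
have main c : ((1 - delta)%:E <=
    P [set w | ((if c then pbar - xbar w else xbar w - pbar) < bound)%R])%E.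
  pose pc i := if c then 1 - p i else p i.
  have hpc : forall i (bb : bool),
      P (X i @^-1` [set ((bb (+) c : bool) : nat)%:R]) = (wB (pc i) bb)%:E.
    move=> i bb; rewrite /pc /wB.
    by destruct bb, c => /=; rewrite ?mulr1n ?mulr0n ?hp1 ?hp0 // opprB addrC subrK.
  have hpc01 i : 0 <= pc i <= 1 by rewrite /pc; destruct c; have := hp i; case/andP => ? ?; apply/andP; split; lra.
  have [mS hS] := core hbern hindep hpc Tm.
  set S := [set w | _] in mS hS.
  have hfin := fin_chernoff Tm hpc01 lam0 lam3.
  have VE : \sum_i pc i * (1 - pc i) = V.
    by rewrite /V /pc; destruct c; apply: eq_bigr => i _; ring.
  rewrite VE in hfin.
  have keyE x : (if c then pbar - xbar x else xbar x - pbar)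
      = n%:R^-1 * \sum_i ((if c then 1 - X i x else X i x) - pc i).
    rewrite /xbar /pbar /pc; destruct c; rewrite -mulrBr; congr (_ * _);
      rewrite -sumrB; apply: eq_bigr => i _; ring.
  have hPS : (P S <= delta%:E)%E.
    apply: (le_trans hS); rewrite lee_fin.
    apply: (le_trans hfin); rewrite -eL ler_expR.
    apply: le_trans hexp; rewrite lerD2l.
    apply: ler_wpM2l => //.
    apply: mulr_ge0; first exact: sqr_ge0.
    rewrite invr_ge0; lra.
  have -> : [set w | ((if c then pbar - xbar w else xbar w - pbar) < bound)%R] = ~` S.
    apply/seteqP; split => x /=; rewrite keyE ltr_pdivrMl // -TmE ltNge.
      by move=> /negP.
    by move=> h; apply/negP.
  rewrite probability_setC // EFinB.
  apply: leeB => //.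
split; [exact: (main false) | exact: (main true)].
Qed.
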